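(* Let $P$ be a positive event pattern, $I$ an event stream, and $G=(V,\mathcal{E})$ the GRETA graph of $P$ and $I$. For $e \in V$ let $Pr(e)=\{p \in V : (p,e)\in\mathcal{E}\}$ be its predecessor events, and define $e.count$ recursively in order of increasing time by $$e.count = [\,e.type = start(P)\,] + \sum_{p \in Pr(e)} p.count,$$ where $[\cdot]$ is $1$ if the condition holds and $0$ otherwise. Then (1) for every $e \in V$, $e.count$ equals the number of directed paths in $G$ (including the one-vertex path) that start at a vertex of type $start(P)$ and end at $e$; and (2) $final\_count := \sum_{e \in V,\ e.type = end(P)} e.count$ equals the number of directed paths in $G$ from a vertex of type $start(P)$ to a vertex of type $end(P)$, i.e., the number of trends captured by $G$.
   Context: Events: each event $e$ has an event type $e.type$ and an occurrence time $e.time \in \mathbb{Q}_{\ge 0}$. An event stream $I$ is a finite collection of distinct events arriving in nondecreasing order of time. Positive patterns: an event type $E$ is a pattern; if $P_i,P_j$ are patterns then $P_i+$ and $\mathsf{SEQ}(P_i,P_j)$ are patterns; each event type occurs at most once in a pattern. Matches over $I$: $matches(E)=\{(e): e\in I, e.type=E\}$; $(e_1,\dots,e_k)\in matches(\mathsf{SEQ}(P_i,P_j))$ iff for some $1\le m\le k$, $(e_1,\dots,e_m)\in matches(P_i)$, $(e_{m+1},\dots,e_k)\in matches(P_j)$ and $e_1.time<\dots<e_k.time$; $matches(P_i+)$ consists of concatenations $s_1\cdots s_k$ ($k\ge1$) with each $s_l\in matches(P_i)$ and the last event of $s_l$ strictly earlier than the first event of $s_{l+1}$. Trends matched by $P$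 in $I$ are the elements of $matches(P)$. Define $start(E)=end(E)=E$, $start(P_i+)=start(P_i)$, $end(P_i+)=end(P_i)$, $start(\mathsf{SEQ}(P_i,P_j))=start(P_i)$, $end(\mathsf{SEQ}(P_i,P_j))=end(P_j)$. The GRETA graph $G=(V,\mathcal{E})$ has as vertices the events of $I$ occurring in at least one trend matched by $P$ in $I$, and an edge $(e_i,e_j)$ iff $e_i,e_j$ are consecutive events, in this order, in some trend matched by $P$ in $I$ (so every edge goes strictly forward in time and $G$ is acyclic). *)

(* Defs.v *)
From mathcomp Require Import all_boot all_order all_algebra.
From mathcomp Require Import boolp.
Set Implicit Arguments. Unset Strict Implicit. Unset Printing Implicit Defensive.
Import Order.TTheory GRing.Theory Num.Theory.

(** Events: (identifier, event type, occurrence time).  The identifier lets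
    distinct events share a type and a time. Event types are naturals. *)
Definition event := (nat * nat * rat)%type.
Definition eid (e : event) : nat := e.1.1.
Definition etype (e : event) : nat := e.1.2.
Definition etime (e : event) : rat := e.2.

Definition is_stream (I : seq event) : Prop :=
  uniq I /\ (forall e, e \in I -> (0 <= etime e)%R) /\
  sorted (fun a b => (etime a <= etime b)%R) I.

Inductive pattern : Type :=
| PEv of nat
| PPlus of pattern
| PSeq of pattern & pattern.

Fixpoint ptypes (P : pattern) : seq nat :=
  match P with
  | PEv E => [:: E]
  | PPlus Q => ptypes Q
  | PSeq Q R => ptypes Q ++ ptypes R
  end.

Definition wf_pattern (P : pattern) : Prop := uniq (ptypes P).

Fixpoint pstart (P : pattern) : nat :=
  match P with
  | PEv E => E
  | PPlus Q => pstart Q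
  | PSeq Q _ => pstart Q
  end.

Fixpoint pend (P : pattern) : nat :=
  match P with
  | PEv E => E
  | PPlus Q => pend Q
  | PSeq _ R => pend R
  end.

Definition before (s t : seq event) : Prop :=
  match rev s, t with
  | a :: _, b :: _ => (etime a < etime b)%R
  | _, _ => False
  end.

Inductive matches (I : seq event) : pattern -> seq event -> Prop :=
| m_ev (E : nat) (e : event) :
    e \in I -> etype e = E -> matches I (PEv E) [:: e]
| m_seq (Q R : pattern) (s1 s2 : seq event) :
    matches I Q s1 -> matches I R s2 ->
    sorted (fun a b => (etime a < etime b)%R) (s1 ++ s2) ->
    matches I (PSeq Q R) (s1 ++ s2)
| m_plus1 (Q : pattern) (s : seq event) :
    matches I Q s -> matches I (PPlus Q) s
| m_plusS (Q : pattern) (s t : seq event) :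
    matches I Q s -> matches I (PPlus Q) t -> before s t ->
    matches I (PPlus Q) (s ++ t).

Definition Vtx (P : pattern) (I : seq event) (e : event) : Prop :=
  exists s, matches I P s /\ e \in s.

Definition Edge (P : pattern) (I : seq event) (a b : event) : Prop :=
  exists s x y, matches I P s /\ s = x ++ a :: b :: y.

Fixpoint chain (E : event -> event -> Prop) (x : event) (s : seq event) : Prop :=
  match s with
  | [::] => True
  | y :: s' => E x y /\ chain E y s'
  end.

(** a directed path in G, given as the nonempty sequence of its vertices *)
Definition gpath (P : pattern) (I : seq event) (p : seq event) : Prop :=
  match p with
  | [::] => False
  | x :: s => (forall v, v \in p -> Vtx P I v) /\ chain (Edge P I) x s
  end.

Definition card_is (T : eqType) (S : T -> Prop) (n : nat) : Prop :=
  exists l : seq T, uniq l /\ (forall x, x \in l <-> S x) /\ size l = n.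

(* Main.v *)
Require Import Defs.
From mathcomp Require Import all_boot all_order all_algebra.
From mathcomp Require Import boolp.
Import Order.TTheory GRing.Theory Num.Theory.
Set Implicit Arguments. Unset Strict Implicit. Unset Printing Implicit Defensive.

Section Card.
Variable T : eqType.

Lemma card_ext (S S' : T -> Prop) n :
  (forall x, S x <-> S' x) -> card_is S n -> card_is S' n.
Proof. move=> H [l [u [m s]]]; exists l; split=>//; split=>// x; rewrite m; apply H. Qed.

Lemma card_union (S1 S2 : T -> Prop) a b :
  (forall x, S1 x -> S2 x -> False) -> card_is S1 a -> card_is S2 b ->
  card_is (fun x => S1 x \/ S2 x) (a + b).
Proof.
move=> D [l1 [u1 [m1 s1]]] [l2 [u2 [m2 s2]]]; exists (l1 ++ l2); split; [|split].
- rewrite cat_uniq u1 u2 andbT /=. apply/hasPn => x /m2 H2; apply/negP => /m1 H1; exact: D H1 H2.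
- move=> x; rewrite mem_cat; split => [/orP [/m1|/m2]|]; auto.
  by case=> [/m1 -> //| /m2 ->]; rewrite orbT.
- by rewrite size_cat s1 s2.
Qed.

Lemma card_empty : card_is (fun _ : T => False) 0.
Proof. by exists [::]. Qed.

Lemma card_single (a : T) : card_is (fun x => x = a) 1.
Proof. exists [:: a]; split=>//; split=>// x; rewrite mem_seq1; split=> [/eqP|->] //. Qed.

Lemma card_bigU (qs : seq event) (F : event -> T -> Prop) (c : event -> nat) :
  uniq qs -> (forall q, q \in qs -> card_is (F q) (c q)) ->
  (forall q1 q2 x, F q1 x -> F q2 x -> q1 = q2) ->
  card_is (fun x => exists2 q, q \in qs & F q x) (\sum_(q <- qs) c q).
Proof.
elim: qs => [|q qs IH] /= Hu Hc Hd.
  rewrite big_nil; apply: card_ext card_empty => x; split=> //; by case.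
case/andP: Hu => nq uq; rewrite big_cons.
have H1 := Hc q (mem_head _ _).
have H2 := IH uq (fun q' h => Hc q' (@mem_behead _ (q :: qs) _ h)) Hd.
have D : forall x, F q x -> (exists2 q', q' \in qs & F q' x) -> False.
  move=> x Fx [q' Hq' Fx']; have E := Hd _ _ _ Fx Fx'; subst q'; by rewrite Hq' in nq.
apply: card_ext (card_union D H1 H2).
move=> x; split.
- by case=> [Fx|[q' Hq' Fx]]; [exists q; rewrite ?mem_head|exists q'; rewrite // inE Hq' orbT].
- case=> q' ; rewrite inE => /orP [/eqP ->|Hq'] Fx; [by left|right; by exists q'].
Qed.

Lemma card_map (U : eqType) (f : T -> U) (S : T -> Prop) n :
  injective f -> card_is S n -> card_is (fun y => exists2 x, S x & y = f x) n.
Proof.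
move=> fi [l [u [m s]]]; exists (map f l); split; first by rewrite map_inj_uniq.
split; last by rewrite size_map.
move=> y; split.
- by case/mapP=> x /m Sx ->; exists x.
- by case=> x /m Sx ->; rewrite mem_map.
Qed.
End Card.

Definition lt (a b : event) : bool := (etime a < etime b)%R.

Lemma matches_in I P s : matches I P s -> forall e, e \in s -> e \in I.
Proof.
elim => [E e' He _ | Q R s1 s2 _ IH1 _ IH2 _ | Q s0 _ IH | Q s0 t _ IH1 _ IH2 _] e;
 [rewrite mem_seq1 => /eqP ->| rewrite mem_cat => /orP[]| | rewrite mem_cat => /orP[]]; auto.
Qed.

Lemma sorted_before s t : sorted lt s -> sorted lt t -> before s t -> sorted lt (s ++ t).
Proof.
case/lastP: s => [|s0 a] //; rewrite /before rev_rcons.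
case: t => [|b t] // Hs Ht Hab.
by rewrite cat_rcons sorted_cat_cons Hs /=; apply/andP; split.
Qed.

Lemma matches_sorted I P s : matches I P s -> sorted lt s.
Proof.
elim => //= Q s0 t _ H1 _ H2 Hb; exact: sorted_before.
Qed.

Lemma Edge_lt P I a b : Edge P I a b -> lt a b.
Proof.
case=> s [x [y [/matches_sorted Hs E]]]; subst s.
by move: Hs; rewrite sorted_cat_cons => /andP [_ /= /andP []].
Qed.

Lemma Vtx_in P I e : Vtx P I e -> e \in I.
Proof. by case=> s [Hm Hi]; exact: matches_in Hm _ Hi. Qed.

Lemma Edge_Vtx P I a b : Edge P I a b -> Vtx P I a /\ Vtx P I b.
Proof.
case=> s [x [y [Hm E]]]; split; exists s; split=> //; subst s;
 by rewrite mem_cat !inE eqxx ?orbT.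
Qed.

Lemma chain_rcons (E : event -> event -> Prop) x s y :
  chain E x (rcons s y) <-> chain E x s /\ E (last x s) y.
Proof.
elim: s x => [|z s IH] x /=; first by split; [case|case].
rewrite IH; tauto.
Qed.

Lemma count_lt (s : seq event) (a b : pred event) q :
  (forall x, a x -> b x) -> q \in s -> b q -> ~~ a q -> count a s < count b s.
Proof.
move=> Hab; elim: s => [|y s IH] //= ; rewrite inE => /orP [/eqP <-|Hq] Hb Ha.
  rewrite (negbTE Ha) Hb add0n add1n ltnS; exact: sub_count.
have: (a y : nat) <= b y by case: (a y) (Hab y) => // ->.
move=> H; rewrite -addnS; apply: leq_add => //; exact: IH.
Qed.

Lemma last_ne (p : seq event) a b : p <> [::] -> last a p = last b p.
Proof. by case: p. Qed.

Section Part1.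
Variables (P : pattern) (I : seq event) (cnt : event -> nat).
Hypothesis Hc : forall e, Vtx P I e ->
     cnt e = ((etype e == pstart P) : nat)
               + \sum_(p <- undup I | `[< Edge P I p e >]) cnt p.

Definition Sp e := fun p : seq event =>
  gpath P I p /\ etype (head e p) = pstart P /\ last e p = e.

Definition qs e := [seq q <- undup I | `[< Edge P I q e >]].

Lemma Sp_dec e : Vtx P I e -> forall p, Sp e p <->
  (etype e = pstart P /\ p = [:: e]) \/
  exists2 q, q \in qs e & (exists2 p', Sp q p' & p = rcons p' e).
Proof.
move=> Ve p; split.
- case/lastP: p => [|p0 x]; first by case.
  case=> Hg [Ht]; rewrite last_rcons => Ex; subst x.
  case: p0 Hg Ht => [|z s] Hg Ht; first by left.
  move: Hg => /= [Hv /chain_rcons [Hch He]].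
  right; exists (last z s).
    rewrite mem_filter mem_undup; apply/andP; split; first by apply/asboolP.
    exact: Vtx_in (proj1 (Edge_Vtx He)).
  exists (z :: s) => //; split; last by split.
  split=> // v Hv'; apply: Hv; move: Hv'; rewrite /= !inE mem_rcons !inE; case/orP => ->; by rewrite ?orbT.
- case=> [[Ht ->]|[q Hq [p' [Hg [Ht El]] ->]]].
    split; last by split.
    by split=> // v; rewrite mem_seq1 => /eqP ->.
  move: Hq; rewrite mem_filter => /andP [/asboolP He _].
  case: p' Hg Ht El => [|z s] // [Hv Hch] Ht El.
  split; last by rewrite last_rcons.
  split=> //=.
    move=> v; rewrite inE mem_rcons inE => /orP [/eqP ->|/orP [/eqP ->|Hv']];
      [exact: Hv (mem_head _ _)| exact: Ve | apply: Hv; by rewrite inE Hv' orbT].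
  by apply/chain_rcons; split=> //; rewrite /= in El; rewrite El.
Qed.

Lemma part1 n : forall e, count (lt^~ e) I < n -> Vtx P I e -> card_is (Sp e) (cnt e).
Proof.
elim: n => [|n IH] e // Hn Ve.
rewrite Hc // -big_filter.
apply: card_ext (fun p => iff_sym (Sp_dec Ve p)) _.
apply: card_union.
- move=> x [_ ->] [q _ [p' [Hg _] E]].
  by case: p' Hg E => [|z s] // _; case: s.
- case: eqP => Ht /=.
    apply: card_ext (card_single [:: e]) => x; tauto.
  apply: card_ext (@card_empty _) => x; tauto.
- apply: card_bigU.
  + by rewrite filter_uniq // undup_uniq.
  + move=> q; rewrite mem_filter => /andP [/asboolP He Hq].
    apply: card_map; first exact: rcons_injl.
    apply: IH; last exact: (proj1 (Edge_Vtx He)).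
    rewrite -ltnS; apply: leq_trans Hn; apply: (count_lt (q := q)).
    * move=> x /= Hx; rewrite /lt; apply: lt_trans Hx (Edge_lt He).
    * by rewrite mem_undup in Hq.
    * exact: Edge_lt He.
    * by rewrite /lt ltxx.
  + move=> q1 q2 x [p1 [Hg1 [_ E1]] ->] [p2 [Hg2 [_ E2]]] E.
    have E' : p1 = p2 := rcons_injl e E.
    subst p2; clear E. rewrite -E1 -E2; apply: last_ne => E0; subst p1; case: Hg1.
Qed.
End Part1.

Theorem theorem3 (P : pattern) (I : seq event) (count : event -> nat) :
  wf_pattern P -> is_stream I ->
  (* e.count is defined by the recursion below on the vertices of G *)
  (forall e, Vtx P I e ->
     count e = ((etype e == pstart P) : nat)
               + \sum_(p <- undup I | `[< Edge P I p e >]) count p) ->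
  (forall e, Vtx P I e ->
     card_is (fun p : seq event =>
                gpath P I p /\ etype (head e p) = pstart P /\ last e p = e)
             (count e))
  /\
  card_is (fun p : seq event =>
             gpath P I p /\ etype (head (0, 0, 0%R) p) = pstart P /\
             etype (last (0, 0, 0%R) p) = pend P)
          (\sum_(e <- undup I | `[< Vtx P I e /\ etype e = pend P >]) count e).
Proof.
move=> _ _ Hc.
have P1 : forall e, Vtx P I e -> card_is (Sp P I e) (count e).
  move=> e; exact: (part1 Hc (ltnSn _)).
split; first exact: P1.
rewrite -big_filter.
set es := [seq e <- undup I | _].
apply: card_ext (card_bigU (qs := es) (F := Sp P I) (c := count) _ _ _).
- move=> p; split.
  + case=> q; rewrite mem_filter => /andP [/asboolP [Vq Tq] _] [Hg [Ht El]].
    case: p Hg Ht El => [|z s] // Hg Ht El; split => //; split => //=.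
    by rewrite /= in El; rewrite El.
  + case: p => [|z s]; first by case.
    case=> Hg [Ht Tl]; exists (last z s).
      rewrite mem_filter mem_undup; apply/andP; split.
        apply/asboolP; split => //; apply: (proj1 Hg); exact: mem_last.
      apply: Vtx_in; apply: (proj1 Hg); exact: mem_last.
    by split.
- by rewrite filter_uniq // undup_uniq.
- move=> q; rewrite mem_filter => /andP [/asboolP [Vq _] _]; exact: P1.
- move=> q1 q2 x [Hg1 [_ E1]] [Hg2 [_ E2]].
  rewrite -E1 -E2; apply: last_ne => E; subst x; case: Hg1.
Qed.
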